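(* Let $A$ be a commutative ring, $E$ a non-zero $A$-module and $R=A\propto E$ the trivial ring extension of $A$ by $E$. Then $R$ is arithmetical if and only if $A$ is arithmetical, $A_P$ is an integral domain for each $P\in\mathrm{Supp}(E)$, and $E$ is locally FP-injective and has a distributive lattice of submodules.
   Context: All rings are commutative with identity. The trivial ring extension $R=A\propto E$ is the ring with underlying additive group $A\times E$ and multiplication $(a,e)(a',e')=(aa',ae'+a'e)$. A module $E$ has a distributive lattice of submodules if $(M+N)\cap P=(M\cap P)+(N\cap P)$ for all submodules $M,N,P$ of $E$; a ring is arithmetical if its lattice of ideals is distributive. A module $E$ is FP-injective if $\mathrm{Ext}^1(F,E)=0$ for every finitely presented module $F$, and locally FP-injective if $E_P$ is an FP-injective $A_P$-module for each maximal ideal $P$. $\mathrm{Supp}(E)=\{P \text{ prime}: E_P\neq 0\}$. *)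

(* Defs.v *)
From HB Require Import structures.
From mathcomp Require Import all_boot all_order all_algebra.
Set Implicit Arguments. Unset Strict Implicit. Unset Printing Implicit Defensive.
Import Order.TTheory GRing.Theory Num.Theory.
Local Open Scope ring_scope.

Definition triv_ext (A : comNzRingType) (E : lmodType A) : Type := (A * E)%type.

HB.instance Definition _ (A : comNzRingType) (E : lmodType A) :=
  GRing.Zmodule.on (triv_ext E).

Definition te_one (A : comNzRingType) (E : lmodType A) : triv_ext E := (1, 0).
Definition te_mul (A : comNzRingType) (E : lmodType A) (x y : triv_ext E) :
  triv_ext E := (x.1 * y.1, x.1 *: y.2 + y.1 *: x.2).

Lemma te_mulA (A : comNzRingType) (E : lmodType A) : associative (@te_mul A E).
Proof.
move=> [a e] [b f] [c g]; rewrite /te_mul /=; congr (_, _); first by rewrite mulrA.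
rewrite !scalerDr !scalerA [c * a]mulrC [c * b]mulrC [b * c]mulrC.
by rewrite addrA [_ + (c * b) *: _]addrC addrA.
Qed.

Lemma te_mulC (A : comNzRingType) (E : lmodType A) : commutative (@te_mul A E).
Proof. by move=> [a e] [b f]; rewrite /te_mul /= mulrC addrC. Qed.

Lemma te_mul1 (A : comNzRingType) (E : lmodType A) :
  left_id (@te_one A E) (@te_mul A E).
Proof. by move=> [a e]; rewrite /te_mul /= mul1r scale1r scaler0 addr0. Qed.

Lemma te_mulDl (A : comNzRingType) (E : lmodType A) :
  left_distributive (@te_mul A E) +%R.
Proof.
move=> [a e] [b f] [c g]; rewrite /te_mul /=.
congr (_, _); first by rewrite mulrDl.
by rewrite scalerDl scalerDr addrACA.
Qed.

Lemma te_one_neq0 (A : comNzRingType) (E : lmodType A) :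
  @te_one A E != 0.
Proof. by apply/negP => /eqP [] /eqP; rewrite oner_eq0. Qed.

HB.instance Definition _ (A : comNzRingType) (E : lmodType A) :=
  GRing.Zmodule_isComNzRing.Build (triv_ext E)
    (@te_mulA A E) (@te_mulC A E) (@te_mul1 A E) (@te_mulDl A E) (@te_one_neq0 A E).


Definition set_sum (M : zmodType) (I J : M -> Prop) : M -> Prop :=
  fun x => exists i j, [/\ I i, J j & x = i + j].
Definition set_meet (T : Type) (I J : T -> Prop) : T -> Prop :=
  fun x => I x /\ J x.

Definition is_ideal (R : comNzRingType) (I : R -> Prop) : Prop :=
  [/\ I 0, (forall x y, I x -> I y -> I (x + y)) & (forall r x, I x -> I (r * x))].

Definition arithmetical (R : comNzRingType) : Prop :=
  forall I J K : R -> Prop, is_ideal I -> is_ideal J -> is_ideal K ->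
    forall x, set_meet (set_sum I J) K x <-> set_sum (set_meet I K) (set_meet J K) x.

Definition is_submodule (A : pzRingType) (M : lmodType A) (N : M -> Prop) : Prop :=
  [/\ N 0, (forall x y, N x -> N y -> N (x + y)) & (forall (a : A) x, N x -> N (a *: x))].

Definition distributive_submodules (A : pzRingType) (M : lmodType A) : Prop :=
  forall N1 N2 N3 : M -> Prop,
    is_submodule N1 -> is_submodule N2 -> is_submodule N3 ->
    forall x, set_meet (set_sum N1 N2) N3 x <-> set_sum (set_meet N1 N3) (set_meet N2 N3) x.

Definition is_prime_ideal (R : comNzRingType) (P : R -> Prop) : Prop :=
  [/\ is_ideal P, ~ P 1 & forall a b, P (a * b) -> P a \/ P b].

Definition is_maximal_ideal (R : comNzRingType) (P : R -> Prop) : Prop :=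
  [/\ is_ideal P, ~ P 1 &
      forall I, is_ideal I -> (forall x, P x -> I x) -> (forall x, I x -> P x) \/ I 1].

(* Integral domain (the ring is non-trivial by its type). *)
Definition is_domain (R : comNzRingType) : Prop :=
  forall x y : R, x * y = 0 -> x = 0 \/ y = 0.

(* Localization at a prime P (S = A \ P), given by its standard        *)
(* characterization (Atiyah–Macdonald): phi : A -> B is (isomorphic to)*)
(* the canonical map A -> A_P iff                                      *)
Definition is_localization_at (A B : comNzRingType) (P : A -> Prop)
    (phi : {rmorphism A -> B}) : Prop :=
  [/\ forall s, ~ P s -> exists u, phi s * u = 1,
      forall b : B, exists a s, ~ P s /\ b * phi s = phi a &
      forall a, phi a = 0 -> exists s, ~ P s /\ s * a = 0].

(* psi : E -> M exhibits the B-module M as (isomorphic to) E_P = E ⊗ A_P,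
   where phi : A -> B is a localization of A at P. *)
Definition is_module_localization (A B : comNzRingType) (P : A -> Prop)
    (phi : {rmorphism A -> B}) (E : lmodType A) (M : lmodType B) (psi : E -> M) : Prop :=
  [/\ forall x y, psi (x + y) = psi x + psi y,
      forall (a : A) (e : E), psi (a *: e) = phi a *: psi e,
      forall m : M, exists e s, ~ P s /\ phi s *: m = psi e &
      forall e, psi e = 0 -> exists s, ~ P s /\ s *: e = 0].

Definition localization_is_domain (A : comNzRingType) (P : A -> Prop) : Prop :=
  forall (B : comNzRingType) (phi : {rmorphism A -> B}),
    is_localization_at P phi -> is_domain B.

Definition in_supp (A : comNzRingType) (E : lmodType A) (P : A -> Prop) : Prop :=
  is_prime_ideal P /\
  forall (B : comNzRingType) (phi : {rmorphism A -> B}), is_localization_at P phi ->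
  forall (M : lmodType B) (psi : E -> M), @is_module_localization A B P phi E M psi ->
    exists m : M, m != 0.

Definition finitely_presented (B : comNzRingType) (F : lmodType B) : Prop :=
  exists (n m : nat) (f : {linear 'rV[B]_n -> F}) (g : {linear 'rV[B]_m -> 'rV[B]_n}),
    (forall y : F, exists v, f v = y) /\
    (forall v, f v = 0 <-> exists w, v = g w).

(* Ext^1_B(F, M) = 0, via Yoneda: every short exact sequence
   0 -> M --i--> X --p--> F -> 0 of B-modules splits. *)
Definition Ext1_vanishes (B : comNzRingType) (F M : lmodType B) : Prop :=
  forall (X : lmodType B) (i : {linear M -> X}) (p : {linear X -> F}),
    injective i -> (forall y : F, exists x, p x = y) ->
    (forall x, p x = 0 <-> exists m, x = i m) ->
    exists r : {linear X -> M}, forall m, r (i m) = m.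

Definition FP_injective (B : comNzRingType) (M : lmodType B) : Prop :=
  forall F : lmodType B, finitely_presented F -> Ext1_vanishes F M.

Definition locally_FP_injective (A : comNzRingType) (E : lmodType A) : Prop :=
  forall P : A -> Prop, is_maximal_ideal P ->
  forall (B : comNzRingType) (phi : {rmorphism A -> B}), is_localization_at P phi ->
  forall (M : lmodType B) (psi : E -> M), @is_module_localization A B P phi E M psi ->
    FP_injective M.

(* Main.v *)
Require Import Defs.
From HB Require Import structures.
From mathcomp Require Import all_boot all_order all_algebra.
From mathcomp Require Import boolp ring.
From mathcomp Require classical_sets.
Set Implicit Arguments. Unset Strict Implicit. Unset Printing Implicit Defensive.
Import GRing.Theory.
Local Open Scope ring_scope.

Section LmodRing.
Variables (A : comNzRingType) (V : lmodType A).
Definition tI (v : V) : triv_ext V := (0, v).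
Definition tK (a : A) : triv_ext V := (a, 0).
Lemma tI_inj : injective tI.
Proof. by move=> x y [] . Qed.
Lemma tI_zmod : zmod_morphism tI.
Proof. by move=> x y; rewrite /tI; congr pair; rewrite subr0. Qed.
HB.instance Definition _ := GRing.isZmodMorphism.Build V (triv_ext V) tI tI_zmod.
Lemma tK_zmod : zmod_morphism tK.
Proof. by move=> x y; rewrite /tK; congr pair; rewrite subr0. Qed.
HB.instance Definition _ := GRing.isZmodMorphism.Build A (triv_ext V) tK tK_zmod.
Lemma tK_mon : monoid_morphism tK.
Proof.
split => // x y; rewrite /tK; congr pair; rewrite /= !scaler0 addr0 //.
Qed.
HB.instance Definition _ := GRing.isMonoidMorphism.Build A (triv_ext V) tK tK_mon.
Lemma tIZ a v : tI (a *: v) = tK a * tI v.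
Proof. by rewrite /tI /tK; congr pair; rewrite /= ?mulr0 // scale0r addr0. Qed.
Lemma tID x y : tI (x + y) = tI x + tI y. Proof. exact: raddfD. Qed.
Lemma tIB x y : tI (x - y) = tI x - tI y. Proof. exact: raddfB. Qed.
Lemma tIN x : tI (- x) = - tI x. Proof. exact: raddfN. Qed.
Lemma tI0 : tI 0 = 0. Proof. exact: raddf0. Qed.
Lemma tKD x y : tK (x + y) = tK x + tK y. Proof. exact: raddfD. Qed.
Lemma tKB x y : tK (x - y) = tK x - tK y. Proof. exact: raddfB. Qed.
Lemma tKN x : tK (- x) = - tK x. Proof. exact: raddfN. Qed.
Lemma tK0 : tK 0 = 0. Proof. exact: raddf0. Qed.
Lemma tKM x y : tK (x * y) = tK x * tK y. Proof. exact: rmorphM. Qed.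
Lemma tK1 : tK 1 = 1. Proof. exact: rmorph1. Qed.
End LmodRing.

Ltac lmod_id := apply: tI_inj; rewrite ?(tIZ, tID, tIB, tIN, tI0); rewrite ?(tKD, tKB, tKN, tK0, tKM, tK1); ring.

Goal forall (A : comNzRingType) (V : lmodType A) (u u' s s' s'' : A) (v v' v'' : V),
 (u * u' * s') *: (s'' *: v - s *: v'') =
   (u' * s'') *: (u *: (s' *: v - s *: v')) + (u * s) *: (u' *: (s'' *: v' - s' *: v'')).
Proof. move=> *; lmod_id. Qed.

Section Q.
Variables (T : choiceType) (G : T -> Prop) (R : T -> T -> Prop) (w : T -> T).
Definition canon (x : T) : T := choose (fun y => `[< G y /\ R x y >]) (w x).
Definition qtype := {x : T | canon x == x}.
End Q.
HB.instance Definition _ T G R w := Choice.on (@qtype T G R w).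

Section QTheory.
Variables (T : choiceType) (G : T -> Prop) (R : T -> T -> Prop) (w : T -> T).
Record qhyp : Prop := QHyp {
  Rrefl : forall x, R x x;
  Rsym : forall x y, R x y -> R y x;
  Rtrans : forall x y z, R x y -> R y z -> R x z;
  Hw : forall x, G (w x) /\ R x (w x) }.
Hypothesis H : qhyp.

Lemma canonP x : G (canon G R w x) /\ R x (canon G R w x).
Proof.
apply/asboolP; rewrite /canon.
apply: (@chooseP _ (fun y => `[< G y /\ R x y >])); apply/asboolP; exact: (Hw H).
Qed.

Lemma canon_eq x y : R x y -> canon G R w x = canon G R w y.
Proof.
move=> Rxy; rewrite /canon.
have -> : (fun z => `[< G z /\ R x z >]) = (fun z => `[< G z /\ R y z >]).
  apply: funext => z; apply/asboolP/asboolP => -[Gz Rz]; split => //.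
    by apply: (Rtrans H) (Rsym H Rxy) Rz.
  by apply: (Rtrans H) Rxy Rz.
apply: choose_id; apply/asboolP; split; try apply (Hw H).
  by apply: (Rtrans H) (Rsym H Rxy) (Hw H x).2.
Qed.

Lemma canon_idem x : canon G R w (canon G R w x) = canon G R w x.
Proof. by apply/esym/canon_eq; apply (canonP x).2. Qed.

Definition qpi (x : T) : qtype G R w := exist _ (canon G R w x) (introT eqP (canon_idem x)).

Lemma qpiP x y : qpi x = qpi y <-> R x y.
Proof.
split.
  move=> /(congr1 val) /= E.
  apply: (Rtrans H) (canonP x).2 _; rewrite E; apply: (Rsym H); apply (canonP y).2.
by move=> Rxy; apply: val_inj => /=; apply: canon_eq.
Qed.

Lemma qpi_val (q : qtype G R w) : qpi (val q) = q.
Proof. by apply: val_inj => /=; case: q => x /= /eqP. Qed.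

Lemma qval_G (q : qtype G R w) : G (val q).
Proof. by case: q => x /= /eqP <-; apply canonP. Qed.

Lemma qval_pi x : R x (val (qpi x)).
Proof. exact (canonP x).2. Qed.

Lemma qpi_ind (P : qtype G R w -> Prop) : (forall x, G x -> P (qpi x)) -> forall q, P q.
Proof. by move=> HP q; rewrite -(qpi_val q); apply: HP; apply: qval_G. Qed.
End QTheory.

Record mset (A : comNzRingType) := MSet {
  mpred :> A -> Prop;
  mset1 : mpred 1;
  msetM : forall a b, mpred a -> mpred b -> mpred (a * b);
  mset0 : ~ mpred 0 }.

Section LocT.
Variables (A : comNzRingType) (S : mset A) (V : lmodType A).
Let S1 : S 1 := mset1 S.
Let SM : forall a b, S a -> S b -> S (a * b) := @msetM A S.

Definition lT := (V * A)%type.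
Definition lG (x : lT) := S x.2.
Definition lw (x : lT) : lT := if `[< S x.2 >] then x else (0, 1).
Definition Rg (x y : lT) := exists u, S u /\ u *: (y.2 *: x.1 - x.2 *: y.1) = 0.
Definition lR (x y : lT) := Rg (lw x) (lw y).

Lemma Rg_refl x : Rg x x.
Proof. by exists 1; split => //; rewrite subrr scaler0. Qed.
Lemma Rg_sym x y : Rg x y -> Rg y x.
Proof. by move=> [u [Su H]]; exists u; split => //; rewrite -opprB scalerN H oppr0. Qed.
Lemma Rg_trans x y z : lG y -> Rg x y -> Rg y z -> Rg x z.
Proof.
case: x y z => [v s] [v' s'] [v'' s''] /= Gy [u [Su H1]] [u' [Su' H2]] /=.
exists (u * u' * s'); split; first by apply: SM => //; apply: SM.
rewrite /= in H1 H2.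
have -> : (u * u' * s') *: (s'' *: v - s *: v'') =
   (u' * s'') *: (u *: (s' *: v - s *: v')) + (u * s) *: (u' *: (s'' *: v' - s' *: v'')).
  by lmod_id.
by rewrite H1 H2 !scaler0 addr0.
Qed.

Lemma lwG x : lG (lw x).
Proof. by rewrite /lw; case: asboolP. Qed.
Lemma lw_id x : lG x -> lw x = x.
Proof. by rewrite /lw; case: asboolP. Qed.

Lemma lR_refl x : lR x x. Proof. exact: (Rg_refl (lw x)). Qed.
Lemma lR_sym x y : lR x y -> lR y x. Proof. exact: Rg_sym. Qed.
Lemma lR_trans x y z : lR x y -> lR y z -> lR x z.
Proof. by move=> H1 H2; apply: Rg_trans (lwG y) H1 H2. Qed.
Lemma lHw x : lG (lw x) /\ lR x (lw x).
Proof. split; first exact: lwG. by rewrite /lR (lw_id (lwG x)); apply: (Rg_refl (lw x)). Qed.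

Lemma lRE x y : lG x -> lG y -> lR x y <-> Rg x y.
Proof. by move=> Gx Gy; rewrite /lR !lw_id. Qed.

Definition Loc := qtype lG lR lw.
HB.instance Definition _ := Choice.on Loc.
Lemma lH : qhyp lG lR lw.
Proof. exact: (QHyp lR_refl lR_sym lR_trans lHw). Qed.
Definition lpi (x : lT) : Loc := qpi lH x.

Lemma lpiP x y : lG x -> lG y -> lpi x = lpi y <-> Rg x y.
Proof. by move=> Gx Gy; rewrite -lRE //; apply: (qpiP lH). Qed.
Lemma lpi_val (q : Loc) : lpi (val q) = q.
Proof. exact: (qpi_val lH). Qed.
Lemma lval_G (q : Loc) : lG (val q).
Proof. exact: (qval_G lH). Qed.
Lemma lval_pi x : lG x -> Rg x (val (lpi x)).
Proof. by move=> Gx; rewrite -lRE //; [apply: (qval_pi lH) | apply: lval_G]. Qed.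
Lemma lpi_ind (P : Loc -> Prop) : (forall x, lG x -> P (lpi x)) -> forall q, P q.
Proof. exact: (@qpi_ind _ _ _ _ lH P). Qed.

Definition addT (x y : lT) : lT := (y.2 *: x.1 + x.2 *: y.1, x.2 * y.2).
Definition oppT (x : lT) : lT := (- x.1, x.2).
Definition zeroT : lT := (0, 1).

Lemma addT_G x y : lG x -> lG y -> lG (addT x y). Proof. exact: SM. Qed.
Lemma zeroT_G : lG zeroT. Proof. exact: S1. Qed.

Lemma addT_compat x x' y : lG x -> lG x' -> lG y -> Rg x x' -> Rg (addT x y) (addT x' y).
Proof.
case: x x' y => [v s] [v' s'] [z t] /= Gx Gx' Gy [u [Su H]]; exists u; split => //=.
rewrite /= in H.
have -> : u *: (s' * t *: (t *: v + s *: z) - s * t *: (t *: v' + s' *: z)) =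
   (t * t) *: (u *: (s' *: v - s *: v')) by lmod_id.
by rewrite H scaler0.
Qed.
Lemma addT_C x y : addT x y = addT y x.
Proof. by rewrite /addT addrC mulrC. Qed.
Lemma oppT_compat x x' : Rg x x' -> Rg (oppT x) (oppT x').
Proof.
case: x x' => [v s] [v' s'] [u [Su H]]; exists u; split => //=.
have -> : u *: (s' *: - v - s *: - v') = - (u *: (s' *: v - s *: v')) by lmod_id.
by rewrite /= H oppr0.
Qed.

Definition ladd (p q : Loc) : Loc := lpi (addT (val p) (val q)).
Definition lopp (p : Loc) : Loc := lpi (oppT (val p)).
Definition lzero : Loc := lpi zeroT.

Lemma laddE x y : lG x -> lG y -> ladd (lpi x) (lpi y) = lpi (addT x y).
Proof.
move=> Gx Gy; rewrite /ladd; apply/lpiP; try (apply: addT_G => //; apply: lval_G).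
apply: (@Rg_trans _ (addT x (val (lpi y)))); first by apply: addT_G => //; apply: lval_G.
  apply: Rg_sym; apply: addT_compat => //; try apply: lval_G.
  by apply: lval_pi.
rewrite (addT_C x) (addT_C x).
apply: Rg_sym; apply: addT_compat => //; try apply: lval_G.
by apply: lval_pi.
Qed.
Lemma loppE x : lG x -> lopp (lpi x) = lpi (oppT x).
Proof.
move=> Gx; rewrite /lopp; apply/lpiP; try apply: lval_G; try done.
by apply: Rg_sym; apply: oppT_compat; apply: lval_pi.
Qed.

Lemma Rg_eq x y : x = y -> Rg x y.
Proof. by move=> ->; apply: Rg_refl. Qed.

Lemma laddA : associative ladd.
Proof.
elim/lpi_ind => x Gx; elim/lpi_ind => y Gy; elim/lpi_ind => z Gz.
rewrite !laddE //; try (apply: addT_G => //).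
apply/lpiP; do ?(apply: addT_G => //); apply: Rg_eq.
case: x y z {Gx Gy Gz} => [v s] [v' s'] [v'' s''] /=; rewrite /addT /=.
by congr pair; [lmod_id | rewrite mulrA].
Qed.
Lemma laddC : commutative ladd.
Proof.
elim/lpi_ind => x Gx; elim/lpi_ind => y Gy.
by rewrite !laddE // addT_C.
Qed.
Lemma ladd0 : left_id lzero ladd.
Proof.
elim/lpi_ind => x Gx; rewrite /lzero (laddE zeroT_G Gx).
congr lpi; case: x {Gx} => v s; rewrite /addT /=; congr pair; last by rewrite mul1r.
by rewrite scale1r scaler0 add0r.
Qed.
Lemma laddN : left_inverse lzero lopp ladd.
Proof.
elim/lpi_ind => x Gx; rewrite loppE // laddE //; apply/lpiP.
- by apply: addT_G.
- exact: zeroT_G.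
exists 1; split => //; case: x {Gx} => v s /=.
have -> : 1 *: (1 *: (s *: - v + s *: v) - s * s *: (0:V)) = 0 :> V by lmod_id.
done.
Qed.

HB.instance Definition _ := GRing.isZmodule.Build Loc laddA laddC ladd0 laddN.

End LocT.

Section LocRing.
Variables (A : comNzRingType) (S : mset A).
Let S1 : S 1 := mset1 S.
Let SM : forall a b, S a -> S b -> S (a * b) := @msetM A S.

Definition LocR := Loc S (A^o).
HB.instance Definition _ := GRing.Zmodule.on LocR.

Lemma scAo (a b : A) : a *: (b : A^o) = a * b. Proof. by []. Qed.

Definition mulT (x y : lT (A^o)) : lT (A^o) := ((x.1 : A) * y.1, x.2 * y.2).
Lemma mulT_G x y : lG S x -> lG S y -> lG S (mulT x y). Proof. exact: SM. Qed.
Lemma mulT_C x y : mulT x y = mulT y x.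
Proof. by rewrite /mulT mulrC [x.2 * _]mulrC. Qed.
Lemma mulT_compat x x' y : Rg S x x' -> Rg S (mulT x y) (mulT x' y).
Proof.
case: x x' y => [v s] [v' s'] [z t] [u [Su H]]; exists u; split => //=.
rewrite /= !scAo in H *.
have -> : u * (s' * t * (v * z) - s * t * (v' * z)) = (t * z) * (u * (s' * v - s * v')) by ring.
by rewrite H mulr0.
Qed.

Definition lmul (p q : LocR) : LocR := lpi S (mulT (val p) (val q)).
Definition lone : LocR := lpi S ((1 : A^o), (1 : A)).

Lemma lmulE x y : lG S x -> lG S y -> lmul (lpi S x) (lpi S y) = lpi S (mulT x y).
Proof.
move=> Gx Gy; rewrite /lmul; apply/lpiP; try (apply: mulT_G => //; apply: lval_G).
apply: (@Rg_trans _ _ _ _ (mulT x (val (lpi S y)))); first by apply: mulT_G => //; apply: lval_G.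
  apply: Rg_sym; apply: mulT_compat => //; try apply: lval_G.
  by apply: lval_pi.
rewrite (mulT_C x) (mulT_C x).
apply: Rg_sym; apply: mulT_compat => //; try apply: lval_G.
by apply: lval_pi.
Qed.

Lemma lmulA : associative lmul.
Proof.
elim/lpi_ind => x Gx; elim/lpi_ind => y Gy; elim/lpi_ind => z Gz.
rewrite !lmulE //; try (apply: mulT_G => //).
by congr lpi; rewrite /mulT /= !mulrA.
Qed.
Lemma lmulC : commutative lmul.
Proof.
elim/lpi_ind => x Gx; elim/lpi_ind => y Gy.
by rewrite !lmulE // mulT_C.
Qed.
Lemma lmul1 : left_id lone lmul.
Proof.
elim/lpi_ind => x Gx; rewrite /lone lmulE //.
by congr lpi; case: x {Gx} => v s; rewrite /mulT /= !mul1r.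
Qed.
Lemma lmulDl : left_distributive lmul +%R.
Proof.
elim/lpi_ind => x Gx; elim/lpi_ind => y Gy; elim/lpi_ind => z Gz.
rewrite /GRing.add /= (laddE Gx Gy) (lmulE (addT_G Gx Gy) Gz) (lmulE Gx Gz) (lmulE Gy Gz).
rewrite (laddE (mulT_G Gx Gz) (mulT_G Gy Gz)).
apply/lpiP; [apply: mulT_G => //; exact: addT_G | apply: addT_G; exact: mulT_G |].
exists 1; split => //.
case: x y z {Gx Gy Gz} => [v s] [v' s'] [v'' s''] /=; rewrite !scAo.
by ring.
Qed.
Lemma lone_neq0 : lone != 0.
Proof.
apply/eqP => E.
have [u [Su]] := (lpiP (x := ((1:A^o), (1:A))) (y := zeroT A^o) (mset1 S) (mset1 S)).1 E.
rewrite /= !scAo mulr1 mulr0 subr0 mulr1 => Hu.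
by move: Su; rewrite Hu; apply: mset0.
Qed.

HB.instance Definition _ := GRing.Zmodule_isComNzRing.Build LocR lmulA lmulC lmul1 lmulDl lone_neq0.
End LocRing.

Section LocMod.
Variables (A : comNzRingType) (S : mset A) (V : lmodType A).
Let S1 : S 1 := mset1 S.
Let SM : forall a b, S a -> S b -> S (a * b) := @msetM A S.

Definition scT (b : lT (A^o)) (x : lT V) : lT V := ((b.1 : A) *: x.1, b.2 * x.2).
Lemma scT_G b x : lG S b -> lG S x -> lG S (scT b x). Proof. exact: SM. Qed.
Lemma scT_compatr b x x' : Rg S x x' -> Rg S (scT b x) (scT b x').
Proof.
case: b x x' => [a t] [v s] [v' s'] [u [Su H]]; exists u; split => //=.
rewrite /= in H.
have -> : u *: (t * s' *: (a *: v) - t * s *: (a *: v')) = (t * a) *: (u *: (s' *: v - s *: v')) by lmod_id.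
by rewrite H scaler0.
Qed.
Lemma scT_compatl b b' x : Rg S b b' -> Rg S (scT b x) (scT b' x).
Proof.
case: b b' x => [a t] [a' t'] [v s] [u [Su H]]; exists u; split => //=.
rewrite /= !scAo in H.
have -> : u *: (t' * s *: (a *: v) - t * s *: (a' *: v)) = s *: ((u * (t' * a - t * a')) *: v) by lmod_id.
by rewrite H scale0r scaler0.
Qed.

Definition lscale (q : LocR S) (m : Loc S V) : Loc S V := lpi S (scT (val q) (val m)).

Lemma lscaleE b x : lG S b -> lG S x -> lscale (lpi S b) (lpi S x) = lpi S (scT b x).
Proof.
move=> Gb Gx; rewrite /lscale; apply/lpiP; try (apply: scT_G => //; apply: lval_G).
apply: (@Rg_trans _ _ _ _ (scT b (val (lpi S x)))); first by apply: scT_G => //; apply: lval_G.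
  apply: Rg_sym; apply: scT_compatl; apply: lval_pi => //.
apply: Rg_sym; apply: scT_compatr; apply: lval_pi => //.
Qed.

Lemma lscaleA a b m : lscale a (lscale b m) = lscale (a * b) m.
Proof.
elim/lpi_ind: a => a Ga; elim/lpi_ind: b => b Gb; elim/lpi_ind: m => x Gx.
rewrite /GRing.mul /= (lmulE Ga Gb) !lscaleE //; try (apply: scT_G => //); last exact: mulT_G.
by congr lpi; rewrite /scT /mulT /= scalerA mulrA.
Qed.
Lemma lscale1 : left_id 1 lscale.
Proof.
elim/lpi_ind => x Gx; rewrite /GRing.one /= /lone (lscaleE (b:=((1:A^o),(1:A))) (mset1 S) Gx).
by congr lpi; case: x {Gx} => v s; rewrite /scT /= scale1r mul1r.
Qed.
Lemma lscaleDr : right_distributive lscale +%R.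
Proof.
elim/lpi_ind => b Gb; elim/lpi_ind => x Gx; elim/lpi_ind => y Gy.
rewrite /GRing.add /= (laddE Gx Gy) (lscaleE Gb (addT_G Gx Gy)) (lscaleE Gb Gx) (lscaleE Gb Gy).
rewrite (laddE (scT_G Gb Gx) (scT_G Gb Gy)).
apply/lpiP; [apply: scT_G => //; exact: addT_G | apply: addT_G; exact: scT_G |].
exists 1; split => //.
case: b x y {Gb Gx Gy} => [a t] [v s] [v' s'] /=.
by lmod_id.
Qed.
Lemma lscaleDl m : {morph lscale^~ m : a b / a + b}.
Proof.
elim/lpi_ind: m => x Gx; elim/lpi_ind => a Ga; elim/lpi_ind => b Gb.
rewrite /GRing.add /= (laddE Ga Gb) (lscaleE (addT_G Ga Gb) Gx) (lscaleE Ga Gx) (lscaleE Gb Gx).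
rewrite (laddE (scT_G Ga Gx) (scT_G Gb Gx)).
apply/lpiP; [apply: scT_G => //; exact: addT_G | apply: addT_G; exact: scT_G |].
exists 1; split => //.
case: a b x {Ga Gb Gx} => [a t] [a' t'] [v s] /=; rewrite !scAo.
by lmod_id.
Qed.

HB.instance Definition _ := GRing.Zmodule_isLmodule.Build (LocR S) (Loc S V) lscaleA lscale1 lscaleDr lscaleDl.
End LocMod.

Section LocProps.
Variables (A : comNzRingType) (S : mset A) (V : lmodType A).
Let S1 : S 1 := mset1 S.
Let SM : forall a b, S a -> S b -> S (a * b) := @msetM A S.

Definition lphi (a : A) : LocR S := lpi S ((a : A^o), (1 : A)).
Definition lpsi (v : V) : Loc S V := lpi S (v, (1 : A)).

Lemma lphi_zmod : zmod_morphism lphi.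
Proof.
move=> a b; rewrite /lphi /GRing.add /GRing.opp /= (loppE (V:=A^o) (x:=((b:A^o),(1:A))) S1).
rewrite (laddE (V:=A^o) (x:=((a:A^o),(1:A))) (y:=oppT ((b:A^o),(1:A))) S1 S1).
by congr lpi; rewrite /addT /oppT /= !scAo !mul1r; congr pair; rewrite ?mulr1 ?mul1r. 
Qed.
HB.instance Definition _ := GRing.isZmodMorphism.Build A (LocR S) lphi lphi_zmod.
Lemma lphi_mon : monoid_morphism lphi.
Proof.
split => // a b; rewrite /lphi /GRing.mul /= (lmulE (x:=((a:A^o),(1:A))) (y:=((b:A^o),(1:A))) S1 S1).
by congr lpi; rewrite /mulT /= mulr1.
Qed.
HB.instance Definition _ := GRing.isMonoidMorphism.Build A (LocR S) lphi lphi_mon.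

Lemma lphi_unit s : S s -> exists u, lphi s * u = 1.
Proof.
move=> Ss; exists (lpi S ((1:A^o), s)).
rewrite /lphi /GRing.mul /= (lmulE (x:=((s:A^o),(1:A))) (y:=((1:A^o),s)) S1 Ss) /GRing.one /= /lone.
apply/lpiP; [exact: SM | exact: S1 |].
by exists 1; split => //=; rewrite !scAo; ring.
Qed.

Lemma lphi_frac (b : LocR S) : exists a s, S s /\ b * lphi s = lphi a.
Proof.
elim/lpi_ind: b => -[a s] /= Gs; exists a, s; split => //.
rewrite /lphi /GRing.mul /= (lmulE (x:=((a:A^o),s)) (y:=((s:A^o),(1:A))) Gs S1).
apply/lpiP; [exact: SM | exact: S1 |].
by exists 1; split => //=; rewrite !scAo; ring.
Qed.

Lemma lphi0 a : lphi a = 0 -> exists s, S s /\ s * a = 0.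
Proof.
move=> E; have [u [Su]] := (lpiP (x := ((a:A^o), (1:A))) (y := zeroT A^o) S1 S1).1 E.
move=> Hu; exists u; split => //; rewrite -[RHS]Hu /= !scAo; ring.
Qed.

Lemma lpsiD x y : lpsi (x + y) = lpsi x + lpsi y.
Proof.
rewrite /lpsi /GRing.add /= (laddE (x:=(x,(1:A))) (y:=(y,(1:A))) S1 S1).
by congr lpi; rewrite /addT /= !scale1r mulr1.
Qed.

Lemma lpsiZ a e : lpsi (a *: e) = lphi a *: lpsi e.
Proof.
rewrite /lpsi /lphi /GRing.scale /= (lscaleE (b:=((a:A^o),(1:A))) (x := (e,(1:A))) S1 S1).
by congr lpi; rewrite /scT /= mulr1.
Qed.

Lemma lpsi_frac (m : Loc S V) : exists e s, S s /\ lphi s *: m = lpsi e.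
Proof.
elim/lpi_ind: m => -[e s] /= Gs; exists e, s; split => //.
rewrite /lpsi /lphi /GRing.scale /= (lscaleE (b:=((s:A^o),(1:A))) (x:=(e,s)) S1 Gs).
apply/lpiP; [exact: SM | exact: S1 |].
by exists 1; split => //=; lmod_id.
Qed.

Lemma lpsi0 e : lpsi e = 0 -> exists s, S s /\ s *: e = 0.
Proof.
move=> E; have [u [Su]] := (lpiP (x := (e, (1:A))) (y := zeroT V) S1 S1).1 E.
move=> Hu; exists u; split => //; rewrite -[RHS]Hu /=; lmod_id.
Qed.
End LocProps.

Section PrimeMset.
Variables (A : comNzRingType) (P : A -> Prop) (HP : is_prime_ideal P).
Lemma pm1 : ~ P 1. Proof. by case: HP. Qed.
Lemma pmM a b : ~ P a -> ~ P b -> ~ P (a * b).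
Proof. by move=> Pa Pb; case: HP => _ _ H /H []. Qed.
Lemma pm0 : ~ ~ P 0. Proof. by case: HP => -[H0 _ _] _ _; apply. Qed.
Definition prime_mset : mset A := @MSet A (fun a => ~ P a) pm1 pmM pm0.
End PrimeMset.
Lemma loc_exists (A : comNzRingType) (P : A -> Prop) (HP : is_prime_ideal P) :
  is_localization_at P (lphi (prime_mset HP)).
Proof.
split.
- by move=> s Ps; apply: lphi_unit.
- by move=> b; have [a [s [Ss E]]] := lphi_frac b; exists a, s.
- by move=> a /lphi0.
Qed.

Lemma locmod_exists (A : comNzRingType) (P : A -> Prop) (HP : is_prime_ideal P) (E : lmodType A) :
  is_module_localization P (lphi (prime_mset HP)) (@lpsi A (prime_mset HP) E).
Proof.
split.
- exact: lpsiD.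
- exact: lpsiZ.
- by move=> m; have [e [s [Ss H]]] := lpsi_frac m; exists e, s.
- by move=> e /lpsi0.
Qed.

Record subm (K : pzRingType) (V : lmodType K) := SubM {
  spred :> V -> Prop;
  subm0 : spred 0;
  submD : forall x y, spred x -> spred y -> spred (x + y);
  submZ : forall (a : K) x, spred x -> spred (a *: x) }.

Section MQ.
Variables (K : pzRingType) (V : lmodType K) (N : subm V).

Lemma submN x : N x -> N (- x).
Proof. by move=> Nx; rewrite -scaleN1r; apply: submZ. Qed.
Lemma submB x y : N x -> N y -> N (x - y).
Proof. by move=> Nx Ny; apply: submD => //; apply: submN. Qed.

Definition mG (x : V) := True.
Definition mR (x y : V) := N (x - y).
Lemma mH : qhyp mG mR id.
Proof.
split.
- by move=> x; rewrite /mR subrr; apply: subm0.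
- by move=> x y H; rewrite /mR -opprB; apply: submN.
- by move=> x y z H1 H2; rewrite /mR -[x](subrK y) -addrA; apply: submD.
- by move=> x; split => //; rewrite /mR subrr; apply: subm0.
Qed.

Definition MQ := qtype mG mR id.
HB.instance Definition _ := Choice.on MQ.
Definition mqpi (x : V) : MQ := qpi mH x.
Lemma mqpiP x y : mqpi x = mqpi y <-> N (x - y).
Proof. exact: (qpiP mH). Qed.
Lemma mqpi_val (q : MQ) : mqpi (val q) = q.
Proof. exact: (qpi_val mH). Qed.
Lemma mqpi_ind (P : MQ -> Prop) : (forall x, P (mqpi x)) -> forall q, P q.
Proof. by move=> H; apply: (@qpi_ind _ _ _ _ mH P) => x _; apply: H. Qed.
Lemma mval_pi x : N (x - val (mqpi x)).
Proof. exact: (qval_pi mH). Qed.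

Definition madd (p q : MQ) : MQ := mqpi (val p + val q).
Definition mopp (p : MQ) : MQ := mqpi (- val p).
Definition mzero : MQ := mqpi 0.

Lemma mqpi_eq x y : N (x - y) -> mqpi x = mqpi y.
Proof. by move=> H; apply/mqpiP. Qed.

Lemma maddE x y : madd (mqpi x) (mqpi y) = mqpi (x + y).
Proof.
apply: mqpi_eq.
have -> : val (mqpi x) + val (mqpi y) - (x + y) = - ((x - val (mqpi x)) + (y - val (mqpi y))).
  by rewrite !opprD !opprK addrACA ![- _ + _]addrC.
by apply: submN; apply: submD; apply: mval_pi.
Qed.
Lemma moppE x : mopp (mqpi x) = mqpi (- x).
Proof.
apply: mqpi_eq; rewrite opprK addrC; apply: mval_pi.
Qed.

Lemma maddA : associative madd.
Proof. by elim/mqpi_ind => x; elim/mqpi_ind => y; elim/mqpi_ind => z; rewrite !maddE addrA. Qed.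
Lemma maddC : commutative madd.
Proof. by elim/mqpi_ind => x; elim/mqpi_ind => y; rewrite !maddE addrC. Qed.
Lemma madd0 : left_id mzero madd.
Proof. by elim/mqpi_ind => x; rewrite /mzero maddE add0r. Qed.
Lemma maddN : left_inverse mzero mopp madd.
Proof. by elim/mqpi_ind => x; rewrite moppE maddE addNr. Qed.
HB.instance Definition _ := GRing.isZmodule.Build MQ maddA maddC madd0 maddN.

Definition mscale (a : K) (q : MQ) : MQ := mqpi (a *: val q).
Lemma mscaleE a x : mscale a (mqpi x) = mqpi (a *: x).
Proof.
apply: mqpi_eq; rewrite -scalerBr -opprB scalerN; apply: submN; apply: submZ; apply: mval_pi.
Qed.
Lemma mscaleA a b q : mscale a (mscale b q) = mscale (a * b) q.
Proof. by elim/mqpi_ind: q => x; rewrite !mscaleE scalerA. Qed.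
Lemma mscale1 : left_id 1 mscale.
Proof. by elim/mqpi_ind => x; rewrite mscaleE scale1r. Qed.
Lemma mscaleDr : right_distributive mscale +%R.
Proof.
by move=> a; elim/mqpi_ind => x; elim/mqpi_ind => y; rewrite /GRing.add /= maddE !mscaleE (maddE (a *: x)) scalerDr.
Qed.
Lemma mscaleDl q : {morph mscale^~ q : a b / a + b}.
Proof.
by elim/mqpi_ind: q => x a b; rewrite /GRing.add /= !mscaleE maddE scalerDl.
Qed.
HB.instance Definition _ := GRing.Zmodule_isLmodule.Build K MQ mscaleA mscale1 mscaleDr mscaleDl.

Lemma mqpi_lin : linear mqpi.
Proof. by move=> a x y; rewrite /GRing.add /= -maddE /GRing.scale /= -mscaleE. Qed.
HB.instance Definition _ := GRing.isLinear.Build K V MQ *:%R mqpi mqpi_lin.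

Lemma mqpi0 x : mqpi x = 0 <-> N x.
Proof. by rewrite -[0]/(mzero) /mzero mqpiP subr0. Qed.
End MQ.

Section Solver.
Variables (B : comNzRingType) (M : lmodType B).

Lemma sum_ind_r (k l0 : nat) (F : nat -> B) : (l0 < k)%N ->
  \sum_(l < k) (((l : nat) == l0)%:R * F l) = F l0.
Proof.
move=> Hl; rewrite (bigD1 (Ordinal Hl)) //= eqxx mul1r big1 ?addr0 // => i Hi.
rewrite (_ : (i == l0 :> nat) = false) ?mul0r //; apply/negbTE; apply: contra Hi => /eqP E.
by apply/eqP; apply: val_inj.
Qed.
Lemma sum_ind_m (k l0 : nat) (F : nat -> M) : (l0 < k)%N ->
  \sum_(l < k) (((l : nat) == l0)%:R *: F l) = F l0.
Proof.
move=> Hl; rewrite (bigD1 (Ordinal Hl)) //= eqxx scale1r big1 ?addr0 // => i Hi.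
rewrite (_ : (i == l0 :> nat) = false) ?scale0r //; apply/negbTE; apply: contra Hi => /eqP E.
by apply/eqP; apply: val_inj.
Qed.

Hypothesis chain : forall a b : B, exists q, a = q * b \/ b = q * a.
Hypothesis div : forall d : B, d != 0 -> forall m : M, exists y, d *: y = m.

Lemma pivot k (col : nat -> B) : (exists l, (l < k)%N /\ col l != 0) ->
  exists l0, [/\ (l0 < k)%N, col l0 != 0 & forall l, (l < k)%N -> exists q, col l = q * col l0].
Proof.
elim: k => [|k IH]; first by case=> l [].
move=> Hex.
case: (pselect (exists l, (l < k)%N /\ col l != 0)) => [/IH [l0 [Hl0 Hnz Hq]]|Hno].
- have [q [Ek|E0]] := chain (col k) (col l0).
  + exists l0; split => //; first by apply: ltnW.
    move=> l; rewrite ltnS leq_eqVlt => /orP [/eqP ->|]; first by exists q.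
    exact: Hq.
  + have Hk : col k != 0 by apply: contra Hnz => /eqP Ek; rewrite E0 Ek mulr0.
    exists k; split => // l; rewrite ltnS leq_eqVlt => /orP [/eqP ->|Hl].
      by exists 1; rewrite mul1r.
    by have [q' ->] := Hq l Hl; exists (q' * q); rewrite E0 mulrA.
- have Z : forall l, (l < k)%N -> col l = 0.
    move=> l Hl; case: (eqVneq (col l) 0) => // H; exfalso; apply: Hno; exists l; split => //.
  have Hk : col k != 0.
    case: Hex => l [Hl Hnz]; move: Hl; rewrite ltnS leq_eqVlt => /orP [/eqP E|Hl].
      by rewrite -E.
    by rewrite (Z l Hl) eqxx in Hnz.
  exists k; split => // l; rewrite ltnS leq_eqVlt => /orP [/eqP ->|Hl].
    by exists 1; rewrite mul1r.
  by exists 0; rewrite mul0r Z.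
Qed.

Definition consistent n k (G : nat -> nat -> B) (rhs : nat -> M) :=
  forall c : nat -> B, (forall j, (j < n)%N -> \sum_(l < k) c l * G l j = 0) ->
    \sum_(l < k) c l *: rhs l = 0.

Lemma solve n : forall k G rhs, consistent n k G rhs ->
  exists y : nat -> M, forall l, (l < k)%N -> \sum_(j < n) G l j *: y j = rhs l.
Proof.
elim: n => [|n IH] k G rhs Hc.
  exists (fun _ => 0) => l Hl; rewrite big_ord0.
  have := Hc (fun i => (i == l)%:R) (fun j (Hj : (j < 0)%N) => False_ind _ (notF Hj)).
  by rewrite sum_ind_m.
case: (pselect (exists l, (l < k)%N /\ G l n != 0)) => [Hex|Hno]; last first.
  have Z : forall l, (l < k)%N -> G l n = 0.
    move=> l Hl; case: (eqVneq (G l n) 0) => // H; exfalso; apply: Hno; exists l; split => //.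
  have [y Hy] : exists y : nat -> M, forall l, (l < k)%N -> \sum_(j < n) G l j *: y j = rhs l.
    apply: IH => c Hcj; apply: Hc => j; rewrite ltnS leq_eqVlt => /orP [/eqP ->|]; last by apply: Hcj.
    by rewrite big1 // => i _; rewrite Z // mulr0.
  by exists y => l Hl; rewrite big_ord_recr /= Z // scale0r addr0 Hy.
have [l0 [Hl0 Hd Hq]] := pivot Hex.
set d := G l0 n.
have [q Hq'] : exists q : nat -> B, forall l, (l < k)%N -> G l n = q l * d.
  have Hex' : forall l, exists q : B, (l < k)%N -> G l n = q * d.
    move=> l; case: (boolP (l < k)%N) => Hl; first by have [q E] := Hq l Hl; exists q.
    by exists 0.
  by have [q Hq2] := choice Hex'; exists q.
pose G' l j := G l j - q l * G l0 j.
pose rhs' l := rhs l - q l *: rhs l0.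
have [y Hy] : exists y : nat -> M, forall l, (l < k)%N -> \sum_(j < n) G' l j *: y j = rhs' l.
  apply: IH => c Hcj.
  pose s := \sum_(i < k) c i * q i.
  pose c' l := c l - (l == l0)%:R * s.
  have E1 j : \sum_(l < k) c' l * G l j = \sum_(l < k) c l * G' l j.
    rewrite /c' /G'.
    under eq_bigr do rewrite mulrBl.
    rewrite sumrB.
    under [X in _ - X = _]eq_bigr do rewrite -mulrA.
    rewrite (sum_ind_r (fun l => s * G l j) Hl0).
    under [RHS]eq_bigr do rewrite mulrBr.
    rewrite sumrB; congr (_ - _).
    rewrite /s mulr_suml; apply: eq_bigr => i _; ring.
  have E2 : \sum_(l < k) c' l *: rhs l = \sum_(l < k) c l *: rhs' l.
    rewrite /c' /rhs'.
    under eq_bigr do rewrite scalerBl.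
    rewrite sumrB.
    under [X in _ - X = _]eq_bigr do rewrite -scalerA.
    rewrite (sum_ind_m (fun l => s *: rhs l) Hl0).
    under [RHS]eq_bigr do rewrite scalerBr.
    rewrite sumrB; congr (_ - _).
    rewrite /s scaler_suml; apply: eq_bigr => i _; rewrite scalerA.
    by rewrite mulrC.
  rewrite -E2; apply: Hc => j; rewrite ltnS leq_eqVlt => /orP [/eqP ->|Hj]; last first.
    by rewrite E1; apply: Hcj.
  rewrite E1 big1 // => i _; rewrite /G' (Hq' i (ltn_ord i)) -/d.
  by rewrite subrr mulr0.
have [yn Hyn] := div Hd (rhs l0 - \sum_(j < n) G l0 j *: y j).
exists (fun j => if j == n then yn else y j) => l Hl.
rewrite big_ord_recr /= eqxx.
have -> : \sum_(i < n) G l (widen_ord (leqnSn n) i) *: (if (widen_ord (leqnSn n) i : nat) == n then yn else y (widen_ord (leqnSn n) i))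
   = \sum_(i < n) G l i *: y i.
  by apply: eq_bigr => i _; rewrite /= ltn_eqF.
have -> : \sum_(i < n) G l i *: y i = rhs' l + q l *: \sum_(j < n) G l0 j *: y j.
  rewrite -Hy // /G' scaler_sumr -big_split /=; apply: eq_bigr => i _.
  by rewrite scalerBl scalerA subrK.
rewrite (Hq' l Hl) -scalerA Hyn /rhs' scalerBr. lmod_id.
Qed.
End Solver.

Definition linwrap (B : pzRingType) (U V : lmodType B) (h : U -> V) (H : linear h) := h.
HB.instance Definition _ (B : pzRingType) (U V : lmodType B) (h : U -> V) (H : linear h) :=
  GRing.isLinear.Build B U V *:%R (linwrap H) H.

Section S0.
Variables (B : comNzRingType) (X M : lmodType B) (n : nat) (i : M -> X) (xs : nat -> X) (ys : nat -> M).
Definition s0f (v : 'rV[B]_n) : X := \sum_(j < n) v 0 j *: (xs j - i (ys j)).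
Lemma s0f_lin : linear s0f.
Proof.
move=> a v w; rewrite /s0f scaler_sumr -big_split /=; apply: eq_bigr => j _.
by rewrite !mxE scalerDl scalerA.
Qed.
HB.instance Definition _ := GRing.isLinear.Build B 'rV[B]_n X *:%R s0f s0f_lin.
End S0.

Section FPinj.
Variables (B : comNzRingType) (M : lmodType B).
Hypothesis chain : forall a b : B, exists q, a = q * b \/ b = q * a.
Hypothesis div : forall d : B, d != 0 -> forall m : M, exists y, d *: y = m.

Lemma fpinj_of : FP_injective M.
Proof.
move=> F [n [m [f [g [surjf exf]]]]] X i p inji surjp exp.
have pi0 : forall y, p (i y) = 0 by move=> y; apply/exp; exists y.
pose e (j : 'I_n) : 'rV[B]_n := delta_mx 0 j.
have [x Hx] : exists x : 'I_n -> X, forall j, p (x j) = f (e j).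
  suff H : forall j, exists y, p y = f (e j) by have [x0 H0] := choice H; exists x0.
  by move=> j; apply: surjp.
pose Gn (l j : nat) : B := match (insub l : option 'I_m), (insub j : option 'I_n) with
   | Some l', Some j' => g (delta_mx 0 l') 0 j' | _, _ => 0 end.
pose xn (j : nat) : X := match (insub j : option 'I_n) with Some j' => x j' | None => 0 end.
have GnE (l : 'I_m) (j : 'I_n) : Gn l j = g (delta_mx 0 l) 0 j by rewrite /Gn !valK.
have xnE (j : 'I_n) : xn j = x j by rewrite /xn valK.
have [mm Hmm] : exists mm : 'I_m -> M, forall l : 'I_m, i (mm l) = \sum_(j < n) Gn l j *: xn j.
  suff H : forall l : 'I_m, exists mm, i mm = \sum_(j < n) Gn l j *: xn j by have [x0 H0] := choice H; exists x0.
  move=> l.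
  have [y ->] : exists y, \sum_(j < n) Gn l j *: xn j = i y; last by exists y.
  apply/exp; rewrite linear_sum /=.
  have -> : \sum_(j < n) p (Gn l j *: xn j) = f (\sum_(j < n) g (delta_mx 0 l) 0 j *: e j).
    rewrite linear_sum; apply: eq_bigr => j _; by rewrite !linearZ /= GnE xnE Hx.
  by rewrite -row_sum_delta; apply/exf; exists (delta_mx 0 l).
pose mmn (l : nat) : M := match (insub l : option 'I_m) with Some l' => mm l' | None => 0 end.
have mmnE (l : 'I_m) : mmn l = mm l by rewrite /mmn valK.
have [yn Hyn] : exists yn : nat -> M, forall l, (l < m)%N -> \sum_(j < n) Gn l j *: yn j = mmn l.
  apply: (solve chain div) => c Hc; apply: inji; rewrite linear0 linear_sum /=.
  under eq_bigr do rewrite linearZ /= mmnE Hmm scaler_sumr.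
  rewrite exchange_big /= big1 // => j _.
  under eq_bigr do rewrite scalerA.
  by rewrite -scaler_suml Hc // scale0r.
pose s0 := @s0f B X M n i xn yn.
have ps0 v : p (s0 v) = f v.
  rewrite /s0 /s0f linear_sum /= [in RHS](row_sum_delta v) linear_sum /=.
  apply: eq_bigr => j _; rewrite !linearZ /= linearB /= pi0 subr0 xnE Hx //.
have s0gl (l : 'I_m) : s0 (g (delta_mx 0 l)) = 0.
  rewrite /s0 /s0f.
  under eq_bigr do rewrite scalerBr -GnE.
  rewrite sumrB -Hmm.
  have -> : \sum_(j < n) Gn l j *: i (yn j) = i (\sum_(j < n) Gn l j *: yn j).
    by rewrite linear_sum; apply: eq_bigr => j _; rewrite linearZ.
  by rewrite Hyn // mmnE subrr.
have s0g w : s0 (g w) = 0.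
  rewrite /s0 [w]row_sum_delta linear_sum linear_sum /= big1 // => l _.
  by rewrite !linearZ /= -/s0 s0gl scaler0.
have [Vf HV] : exists Vf : X -> 'rV[B]_n, forall x, f (Vf x) = p x.
  suff H : forall x, exists v, f v = p x by have [x0 H0] := choice H; exists x0.
  by move=> x0; apply: surjf.
have [Rf HR] : exists Rf : X -> M, forall x, i (Rf x) = x - s0 (Vf x).
  suff H : forall x, exists mm0, i mm0 = x - s0 (Vf x) by have [x0 H0] := choice H; exists x0.
  move=> x0; have [mm0 ->] : exists mm0, x0 - s0 (Vf x0) = i mm0; last by exists mm0.
  by apply/exp; rewrite linearB /= ps0 HV subrr.
have key : forall x v mm0, f v = p x -> i mm0 = x - s0 v -> Rf x = mm0.
  move=> x0 v mm0 Hv Hmm0; apply: inji; rewrite HR Hmm0.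
  have : f (v - Vf x0) = 0 by rewrite linearB /= Hv HV subrr.
  move/exf => [w Ew].
  have : s0 (v - Vf x0) = 0 by rewrite Ew s0g.
  by rewrite /s0 linearB /= -/s0 => /eqP; rewrite subr_eq0 => /eqP ->.
have s0D a u v : s0 (a *: u + v) = a *: s0 u + s0 v by rewrite /s0 linearP.
have Rlin : linear Rf.
  move=> a x1 x2; apply: (key _ (a *: Vf x1 + Vf x2)).
    by rewrite linearD linearZ /= !HV linearD linearZ.
  by rewrite [i (_ + _)]linearD [i (_ *: _)]linearZ /= !HR s0D; lmod_id.
exists (linwrap Rlin) => y; rewrite /linwrap; apply: (key _ 0).
  by rewrite linear0 pi0.
by rewrite /s0 linear0 subr0.
Qed.
End FPinj.

Section Div.
Variables (B : comNzRingType) (M : lmodType B) (d : B) (m0 : M).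
Hypothesis dreg : forall b, d * b = 0 -> b = 0.

Definition Ndp (v : 'rV[B]_1) := exists w, v = d *: w.
Lemma Nd0 : Ndp 0. Proof. by exists 0; rewrite scaler0. Qed.
Lemma NdD x y : Ndp x -> Ndp y -> Ndp (x + y).
Proof. by move=> [w ->] [w' ->]; exists (w + w'); rewrite scalerDr. Qed.
Lemma NdZ a x : Ndp x -> Ndp (a *: x).
Proof. by move=> [w ->]; exists (a *: w); rewrite !scalerA mulrC. Qed.
Definition Nd : subm 'rV[B]_1 := SubM Nd0 NdD NdZ.

Definition NXp (z : M * 'rV[B]_1) := exists w : 'rV[B]_1, z.1 = w 0 0 *: m0 /\ z.2 = - (d *: w).
Lemma NX0 : NXp 0.
Proof. by exists 0; rewrite !mxE scale0r scaler0 oppr0. Qed.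
Lemma NXD x y : NXp x -> NXp y -> NXp (x + y).
Proof.
move=> [w [E1 E2]] [w' [E1' E2']]; exists (w + w'); rewrite /= E1 E1' E2 E2' mxE scalerDl.
by rewrite scalerDr opprD.
Qed.
Lemma NXZ a x : NXp x -> NXp (a *: x).
Proof.
move=> [w [E1 E2]]; exists (a *: w); rewrite /= E1 E2 mxE.
by split; lmod_id.
Qed.
Definition NX : subm (M * 'rV[B]_1)%type := SubM NX0 NXD NXZ.

Definition F := MQ Nd.
Definition X := MQ NX.

Definition gd (w : 'rV[B]_1) : 'rV[B]_1 := d *: w.
Lemma gd_lin : linear gd.
Proof. by move=> a x y; rewrite /gd scalerDr !scalerA mulrC. Qed.

Definition iX (m : M) : X := mqpi NX (m, 0).
Lemma iX_lin : linear iX.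
Proof.
move=> a x y; rewrite /iX -linearP /=; congr mqpi.
have -> : a *: (x, (0:'rV[B]_1)) + (y, 0) = (a *: x + y, a *: 0 + 0) by []. by rewrite scaler0 addr0.
Qed.

Definition pX (q : X) : F := mqpi Nd (val q).2.
Lemma pXE z : pX (mqpi NX z) = mqpi Nd z.2.
Proof.
rewrite /pX; apply/mqpiP.
have [w [_ E2]] := mval_pi NX z.
exists w; rewrite -[d *: w]opprK -E2 /=; by rewrite opprB.
Qed.
Lemma pX_lin : linear pX.
Proof.
move=> a; elim/mqpi_ind => z; elim/mqpi_ind => z'.
rewrite (_ : a *: mqpi NX z + mqpi NX z' = mqpi NX (a *: z + z')); last by rewrite linearP.
by rewrite !pXE linearP.
Qed.

Lemma iX_inj : injective iX.
Proof.
move=> m m' /mqpiP [w [E1 E2]]; apply/eqP; rewrite -subr_eq0; apply/eqP.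
rewrite /= in E1 E2; rewrite E1.
have : d *: w = 0 by rewrite -[d *: w]opprK -E2 subrr oppr0.
move/(congr1 (fun v : 'rV[B]_1 => v 0 0)); rewrite !mxE => /dreg ->.
by rewrite scale0r.
Qed.

Lemma pX_surj y : exists x, pX x = y.
Proof. by elim/mqpi_ind: y => v; exists (mqpi NX (0, v)); rewrite pXE. Qed.

Lemma pX_exact x : pX x = 0 <-> exists m, x = iX m.
Proof.
elim/mqpi_ind: x => z; rewrite pXE mqpi0; split.
  move=> [w Ew]; exists (z.1 + w 0 0 *: m0); apply/mqpiP; exists (- w).
  rewrite /= Ew mxE; split; last by rewrite subr0 scalerN opprK.
  by rewrite scaleNr opprD addrA subrr add0r.
move=> [m /mqpiP [w [_ E2]]]; exists (- w); rewrite /= subr0 in E2.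
by rewrite E2 scalerN.
Qed.

Lemma fp_div : FP_injective M -> exists y, d *: y = m0.
Proof.
move=> HF.
have fpF : finitely_presented F.
  exists 1%N, 1%N, (mqpi Nd : {linear 'rV_1 -> F}), (linwrap gd_lin); split.
  - by elim/mqpi_ind => v; exists v.
  - by move=> v; rewrite mqpi0.
have [r Hr] := HF F fpF X (linwrap iX_lin) (linwrap pX_lin) iX_inj pX_surj pX_exact.
pose e := const_mx 1 : 'rV[B]_1.
exists (r (mqpi NX (0, e))).
rewrite -linearZ /= -[X in _ = X](Hr m0) /linwrap; congr (r _).
rewrite -linearZ /= /iX; apply/mqpiP; exists (- e).
rewrite /= !mxE scaler0 sub0r subr0 scaleN1r; split => //.
by rewrite scalerN opprK.
Qed.
End Div.

Definition jensen (R : comNzRingType) :=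
  forall x y : R, exists a, (exists r, a * x = r * y) /\ (exists r, (1 - a) * y = r * x).
Definition jensenM (A : comNzRingType) (E : lmodType A) :=
  forall e f : E, exists a : A, (exists r, a *: e = r *: f) /\ (exists r, (1 - a) *: f = r *: e).

Section RingCrit.
Variable R : comNzRingType.
Definition pI (x : R) : R -> Prop := fun z => exists r, z = r * x.
Lemma pI_ideal x : is_ideal (pI x).
Proof.
split; first by exists 0; rewrite mul0r.
  by move=> a b [r ->] [r' ->]; exists (r + r'); rewrite mulrDl.
by move=> r a [r' ->]; exists (r * r'); rewrite mulrA.
Qed.

Lemma arith_jensen : arithmetical R -> jensen R.
Proof.
move=> H x y.
have Hx : set_meet (set_sum (pI y) (pI (x - y))) (pI x) x.
  split; last by exists 1; rewrite mul1r.
  exists y, (x - y); split; [by exists 1; rewrite mul1r | by exists 1; rewrite mul1r | ].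
  by rewrite addrC subrK.
have [u [v [[[r1 Eu] [r2 Eu']] [[c Ev] [r3 Ev']] Exuv]]] :=
  (H _ _ _ (pI_ideal y) (pI_ideal (x - y)) (pI_ideal x) x).1 Hx.
exists (1 - c); split.
  exists (r1 - c); apply/eqP; rewrite -subr_eq0.
  rewrite (_ : _ - _ = x - (u + v)); first by rewrite -Exuv subrr.
  by rewrite Eu Ev; ring.
exists (c - r3); apply/eqP; rewrite -subr_eq0.
rewrite (_ : _ - _ = r3 * x - v); first by rewrite Ev' subrr.
by rewrite Ev; ring.
Qed.

Lemma jensen_arith : jensen R -> arithmetical R.
Proof.
move=> H I J K [I0 ID IM] [J0 JD JM] [K0 KD KM] x; split.
  move=> [[i [j [Ii Jj Ex]]] Kx].
  have [a [[r Er] [r' Er']]] := H i j.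
  exists ((1 - a) * x), (a * x); split.
  - split; last exact: KM.
    have -> : (1 - a) * x = (1 - a + r') * i by rewrite Ex mulrDr Er' [RHS]mulrDl.
    exact: IM.
  - split; last exact: KM.
    have -> : a * x = (r + a) * j by rewrite Ex mulrDr Er [RHS]mulrDl.
    exact: JM.
  - by rewrite -mulrDl subrK mul1r.
move=> [u [v [[Iu Ku] [Jv Kv] ->]]]; split; last exact: KD.
by exists u, v.
Qed.
End RingCrit.

Section ModCrit.
Variables (A : comNzRingType) (E : lmodType A).
Definition pM (x : E) : E -> Prop := fun z => exists r, z = r *: x.
Lemma pM_sub x : is_submodule (pM x).
Proof.
split; first by exists 0; rewrite scale0r.
  by move=> a b [r ->] [r' ->]; exists (r + r'); rewrite scalerDl.
by move=> r a [r' ->]; exists (r * r'); rewrite scalerA.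
Qed.

Lemma distr_jensenM : distributive_submodules E -> jensenM E.
Proof.
move=> H x y.
have Hx : set_meet (set_sum (pM y) (pM (x - y))) (pM x) x.
  split; last by exists 1; rewrite scale1r.
  exists y, (x - y); split; [by exists 1; rewrite scale1r | by exists 1; rewrite scale1r | ].
  by rewrite addrC subrK.
have [u [v [[[r1 Eu] [r2 Eu']] [[c Ev] [r3 Ev']] Exuv]]] :=
  (H _ _ _ (pM_sub y) (pM_sub (x - y)) (pM_sub x) x).1 Hx.
exists (1 - c); split.
  exists (r1 - c); apply/eqP; rewrite -subr_eq0.
  rewrite (_ : _ - _ = x - (u + v)); first by rewrite -Exuv subrr.
  by rewrite Eu Ev; lmod_id.
exists (c - r3); apply/eqP; rewrite -subr_eq0.
rewrite (_ : _ - _ = r3 *: x - v); first by rewrite Ev' subrr.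
by rewrite Ev; lmod_id.
Qed.

Lemma jensenM_distr : jensenM E -> distributive_submodules E.
Proof.
move=> H I J K [I0 ID IM] [J0 JD JM] [K0 KD KM] x; split.
  move=> [[i [j [Ii Jj Ex]]] Kx].
  have [a [[r Er] [r' Er']]] := H i j.
  exists ((1 - a) *: x), (a *: x); split.
  - split; last exact: KM.
    have -> : (1 - a) *: x = (1 - a + r') *: i by rewrite Ex scalerDr Er' [RHS]scalerDl.
    exact: IM.
  - split; last exact: KM.
    have -> : a *: x = (r + a) *: j by rewrite Ex scalerDr Er [RHS]scalerDl.
    exact: JM.
  - by rewrite -scalerDl subrK scale1r.
move=> [u [v [[Iu Ku] [Jv Kv] ->]]]; split; last exact: KD.
by exists u, v.
Qed.
End ModCrit.

Section Te.
Variables (A : comNzRingType) (E : lmodType A).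
Notation R := (triv_ext E).
Lemma teM (p q : R) : p * q = (p.1 * q.1, p.1 *: q.2 + q.1 *: p.2). Proof. by []. Qed.
Lemma te1 : (1 : R) = (1, 0). Proof. by []. Qed.
Lemma teD (p q : R) : p + q = (p.1 + q.1, p.2 + q.2). Proof. by []. Qed.
Lemma teN (p : R) : - p = (- p.1, - p.2). Proof. by []. Qed.
Lemma te0 : (0 : R) = (0, 0). Proof. by []. Qed.

Lemma jR_A : jensen R -> jensen A.
Proof.
move=> H a b; have [[c g] [[[r1 r2] E1] [[s1 s2] E2]]] := H (a, 0) (b, 0).
exists c; split; [exists r1 | exists s1].
  by move: (congr1 fst E1).
by move: (congr1 fst E2).
Qed.

Lemma jR_E : jensen R -> jensenM E.
Proof.
move=> H e f; have [[c g] [[[r1 r2] E1] [[s1 s2] E2]]] := H (0, e) (0, f).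
exists c; split; [exists r1 | exists s1].
  by move: (congr1 snd E1); rewrite /= !scale0r !addr0.
by move: (congr1 snd E2); rewrite /= !scale0r !addr0.
Qed.

Lemma jR_L : jensen R -> forall (a : A) (e : E), exists c : A, c * a = 0 /\ exists h, (1 - c) *: e = a *: h.
Proof.
move=> H a e; have [[c g] [[[r1 r2] E1] [[s1 s2] E2]]] := H (a, 0) (0, e).
exists c; split.
  by move: (congr1 fst E1); rewrite /= mulr0.
exists s2; move: (congr1 snd E2); rewrite /= scale0r scaler0 addr0 add0r.
by [].
Qed.

Section PrimeP.
Variables (P : A -> Prop) (HP : is_prime_ideal P).
Lemma prime_1c c : P c -> ~ P (1 - c).
Proof.
case: HP => [[_ HD _] H1 _] Pc P1c; apply: H1.
by rewrite -(subrK c 1); apply: HD.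
Qed.
Lemma primeM a b : ~ P a -> ~ P b -> ~ P (a * b).
Proof. by case: HP => _ _ H Pa Pb /H []. Qed.

Lemma chainA_loc : jensen A -> forall a b : A, exists s, ~ P s /\
  ((exists r, s * a = r * b) \/ (exists r, s * b = r * a)).
Proof.
move=> H a b; have [c [[r Er] [r' Er']]] := H a b.
case: (pselect (P c)) => Pc.
  by exists (1 - c); split; [exact: prime_1c | right; exists r'].
by exists c; split => //; left; exists r.
Qed.

Lemma chainE_loc : jensenM E -> forall e f : E, exists s, ~ P s /\
  ((exists r, s *: e = r *: f) \/ (exists r, s *: f = r *: e)).
Proof.
move=> H a b; have [c [[r Er] [r' Er']]] := H a b.
case: (pselect (P c)) => Pc.
  by exists (1 - c); split; [exact: prime_1c | right; exists r'].
by exists c; split => //; left; exists r.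
Qed.

Lemma dom_A : jensen R -> forall e0 : E, (forall s, ~ P s -> s *: e0 != 0) ->
  forall a b : A, a * b = 0 -> (exists u, ~ P u /\ u * a = 0) \/ (exists u, ~ P u /\ u * b = 0).
Proof.
move=> H e0 He0 a b Eab.
case: (pselect (exists u, ~ P u /\ u * a = 0)) => [|Na]; first by left.
case: (pselect (exists u, ~ P u /\ u * b = 0)) => [|Nb]; first by right.
exfalso.
have [c [Ec [h Eh]]] := jR_L H a e0.
case: (pselect (P c)) => Pc; last by apply: Na; exists c.
have Hh : forall t, ~ P t -> t *: h != 0.
  move=> t Pt; apply/negP => /eqP Eth.
  have := He0 (t * (1 - c)) (primeM Pt (prime_1c Pc)).
  by rewrite -scalerA Eh scalerA mulrC -scalerA Eth scaler0 eqxx.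
have [c' [Ec' [h' Eh']]] := jR_L H b h.
case: (pselect (P c')) => Pc'; last by apply: Nb; exists c'.
have := He0 ((1 - c') * (1 - c)) (primeM (prime_1c Pc') (prime_1c Pc)).
rewrite -scalerA Eh scalerA mulrC -scalerA Eh' scalerA Eab.
by rewrite scale0r eqxx.
Qed.
End PrimeP.
End Te.

Section Max.
Variable A : comNzRingType.

Lemma max_prime (P : A -> Prop) : is_maximal_ideal P -> is_prime_ideal P.
Proof.
move=> [[P0 PD PM] P1 Pmax]; split => //.
move=> a b Pab; case: (pselect (P a)) => Pa; first by left.
right.
pose J := fun z => exists p r, P p /\ z = p + r * a.
have HJ : is_ideal J.
  split.
  - by exists 0, 0; rewrite mul0r addr0.
  - move=> x y [p [r [Pp ->]]] [p' [r' [Pp' ->]]]; exists (p + p'), (r + r'); split; first exact: PD.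
    by rewrite mulrDl addrACA.
  - move=> r0 x [p [r [Pp ->]]]; exists (r0 * p), (r0 * r); split; first exact: PM.
    by rewrite mulrDr mulrA.
have [sub|J1] := Pmax J HJ (fun x Px => ex_intro _ x (ex_intro _ 0 (conj Px (esym (etrans (f_equal _ (mul0r a)) (addr0 x)))))).
  by exfalso; apply: Pa; apply: sub; exists 0, 1; rewrite mul1r add0r.
have [p [r [Pp E1]]] := J1.
have -> : b = p * b + r * (a * b) by rewrite mulrA -mulrDl -E1 mul1r.
by apply: PD; [rewrite mulrC; apply: PM | apply: PM].
Qed.

Lemma exists_max (I : A -> Prop) : is_ideal I -> ~ I 1 ->
  exists P, is_maximal_ideal P /\ forall x, I x -> P x.
Proof.
move=> HI I1.
pose Pz := fun J : A -> Prop => ~ J 1 /\ forall z, J z -> is_ideal J /\ (forall x, I x -> J x).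
have [M [[M1 HM] Mmax]] : exists M, Pz M /\ forall B, classical_sets.proper M B -> ~ Pz B.
  apply: classical_sets.Zorn_bigcup => F FP Ftot; split.
    by move=> [X FX X1]; have [] := FP X FX.
  move=> z [X FX Xz].
  have [HX IX] := (FP X FX).2 z Xz.
  split; last by move=> x Ix; exists X => //; apply: IX.
  split.
  - by exists X => //; case: HX.
  - move=> a b [Xa FXa aXa] [Xb FXb bXb].
    have [HXa _] := (FP Xa FXa).2 a aXa.
    have [HXb _] := (FP Xb FXb).2 b bXb.
    case: (Ftot Xa Xb FXa FXb) => sub.
      by exists Xb => //; case: HXb => _ HD _; apply: HD => //; apply: sub.
    by exists Xa => //; case: HXa => _ HD _; apply: HD => //; apply: sub.
  - move=> r a [Xa FXa aXa]; have [HXa _] := (FP Xa FXa).2 a aXa.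
    by exists Xa => //; case: HXa => _ _ HM'; apply: HM'.
have [z Mz] : exists z, M z.
  apply: contrapT => Hn; apply: (Mmax I).
    split; first by move=> z Mz; exfalso; apply: Hn; exists z.
    move=> Hsub; apply: Hn; exists 0; apply: Hsub; by case: HI.
  by split => // z _; split.
have [HMi IM] := HM z Mz.
exists M; split => //; split => // J HJ MJ.
case: (pselect (J 1)) => J1; first by right.
left; apply: contrapT => Hn; apply: (Mmax J).
  split => // Hsub; apply: Hn => x Jx; exact: Hsub.
by split => // z0 _; split => // x Ix; apply: MJ; apply: IM.
Qed.
End Max.

Lemma unit_cancel (B : comNzRingType) (w z x : B) : w * z = 1 -> x * w = 0 -> x = 0.
Proof. by move=> Ewz Exw; rewrite -[x]mulr1 -Ewz mulrA Exw mul0r. Qed.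

Section Fwd.
Variables (A : comNzRingType) (E : lmodType A).
Notation R := (triv_ext E).
Hypothesis jR : jensen R.

Lemma fwd_supp P : in_supp E P -> localization_is_domain P.
Proof.
move=> [HPp Hsupp] B phi Hloc.
have [e0 He0] : exists e0 : E, forall s, ~ P s -> s *: e0 != 0.
  apply: contrapT => Hn.
  have Z : forall e : E, exists s, ~ P s /\ s *: e = 0.
    move=> e; apply: contrapT => Hn2; apply: Hn; exists e => s Ps; apply/negP => /eqP Es.
    by apply: Hn2; exists s.
  pose psi0 := fun _ : E => (0 : 'rV[B]_0).
  have Hmod : is_module_localization P phi psi0.
    split.
    - by move=> x y; rewrite addr0.
    - by move=> a e; rewrite scaler0.
    - move=> m; exists 0, 1; split; first by case: HPp.
      by rewrite [m]thinmx0 scaler0.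
    - by move=> e _; apply: Z.
  have [m Hm] := Hsupp B phi Hloc _ psi0 Hmod.
  by rewrite [m]thinmx0 eqxx in Hm.
case: Hloc => Hu Hfrac Hker.
move=> x y Exy.
have [a [s [Ps Ex]]] := Hfrac x.
have [b [t [Pt Ey]]] := Hfrac y.
have : phi (a * b) = 0 by rewrite rmorphM -Ex -Ey mulrACA Exy mul0r.
move/Hker => [u [Pu Eu]].
have [zs Ezs] := Hu s Ps; have [zt Ezt] := Hu t Pt.
have [zu Ezu] := Hu u Pu.
have [[v [Pv Ev]] | [v [Pv Ev]]] := dom_A HPp jR He0 (a := u * a) (b := b) (etrans (esym (mulrA _ _ _)) Eu).
- left; apply: (unit_cancel Ezs); rewrite Ex.
  have [zv Ezv] := Hu v Pv.
  apply: (unit_cancel (w := phi (v * u)) (z := zv * zu)).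
    by rewrite rmorphM mulrACA Ezv Ezu mulr1.
  rewrite -rmorphM (_ : a * (v * u) = v * (u * a)); last by ring.
  by rewrite Ev rmorph0.
- right; apply: (unit_cancel Ezt); rewrite Ey.
  have [zv Ezv] := Hu v Pv.
  apply: (unit_cancel Ezv).
  by rewrite -rmorphM mulrC Ev rmorph0.
Qed.

Lemma fwd_fp : locally_FP_injective E.
Proof.
move=> P HPm B phi Hloc M psi Hmod.
have HPp := max_prime HPm.
case: Hloc => Hu Hfrac Hker; case: Hmod => psiD psiZ psifrac psiker.
apply: fpinj_of.
- move=> b1 b2.
  have [a1 [s1 [Ps1 E1]]] := Hfrac b1; have [a2 [s2 [Ps2 E2]]] := Hfrac b2.
  have [t [Pt [[r Er]|[r Er]]]] := chainA_loc HPp (jR_A jR) a1 a2.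
  + have [z Ez] := Hu (s1 * t) (primeM HPp Ps1 Pt).
    exists (phi r * phi s2 * z); left.
    have H1 : b1 * phi (s1 * t) = phi r * phi s2 * b2.
      rewrite rmorphM mulrA E1 -rmorphM [a1 * t]mulrC Er rmorphM -E2; ring.
    by rewrite -[b1]mulr1 -Ez mulrA H1; ring.
  + have [z Ez] := Hu (s2 * t) (primeM HPp Ps2 Pt).
    exists (phi r * phi s1 * z); right.
    have H1 : b2 * phi (s2 * t) = phi r * phi s1 * b1.
      rewrite rmorphM mulrA E2 -rmorphM [a2 * t]mulrC Er rmorphM -E1; ring.
    by rewrite -[b2]mulr1 -Ez mulrA H1; ring.
- move=> d Hd m.
  have [a [s [Ps Ed]]] := Hfrac d.
  have [e [t [Pt Em]]] := psifrac m.
  have [c [Ec [h Eh]]] := jR_L jR a e.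
  have [zs Ezs] := Hu s Ps.
  have Pc : P c.
    apply: contrapT => Pc; move/negP: Hd; apply.
    have [zc Ezc] := Hu c Pc.
    apply/eqP; apply: (unit_cancel Ezs); rewrite Ed.
    apply: (unit_cancel (w := phi c) (z := zc)) => //.
    by rewrite mulrC -rmorphM Ec rmorph0.
  have [zt Ezt] := Hu t Pt; have [zc Ezc] := Hu (1 - c) (prime_1c HPp Pc).
  exists ((zt * zc * phi s) *: psi h).
  have Epe : psi e = (zc * (d * phi s)) *: psi h.
    have E1 : phi (1 - c) *: psi e = (d * phi s) *: psi h by rewrite -psiZ Eh psiZ -Ed.
    have E2 : psi e = zc *: (phi (1 - c) *: psi e) by rewrite scalerA [zc * _]mulrC Ezc scale1r.
    by rewrite {1}E2 E1 scalerA.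
  have Em' : m = zt *: psi e by rewrite -Em scalerA mulrC Ezt scale1r.
  by rewrite Em' Epe !scalerA; congr (_ *: _); ring.
Qed.

Lemma fwd : [/\ arithmetical A,
       (forall P : A -> Prop, in_supp E P -> localization_is_domain P),
       locally_FP_injective E &
       distributive_submodules E].
Proof.
split.
- exact: jensen_arith (jR_A jR).
- exact: fwd_supp.
- exact: fwd_fp.
- exact: jensenM_distr (jR_E jR).
Qed.
End Fwd.

Section Bwd.
Variables (A : comNzRingType) (E : lmodType A).
Notation R := (triv_ext E).

Lemma loc_div (P : A -> Prop) (HPm : is_maximal_ideal P)
  (sd : forall P : A -> Prop, in_supp E P -> localization_is_domain P)
  (lfp : locally_FP_injective E) (e0 : E) (He0 : forall s, ~ P s -> s *: e0 != 0) :
  forall a, (forall u, ~ P u -> u * a != 0) -> forall e : E, exists s h, ~ P s /\ s *: e = a *: h.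
Proof.
have HPp := max_prime HPm.
pose S := prime_mset HPp.
have Hloc := loc_exists HPp; have Hmod := locmod_exists HPp E.
have Hsupp : in_supp E P.
  split => // B' phi' Hloc' M' psi' Hmod'; exists (psi' e0); apply/negP => /eqP H0.
  case: Hmod' => _ _ _ K; have [s [Ps Es]] := K e0 H0.
  by move: (He0 s Ps); rewrite Es eqxx.
have Hdom := sd P Hsupp _ _ Hloc.
have HFP := lfp P HPm _ _ Hloc _ _ Hmod.
move=> a Na e.
have dreg : forall b, lphi S a * b = 0 -> b = 0.
  move=> b /Hdom [H0|//]; have [u [Pu Eu]] := lphi0 H0.
  by move: (Na u Pu); rewrite Eu eqxx.
have [y Hy] := @fp_div _ _ (lphi S a) (lpsi S e) dreg HFP.
have [e' [s [Ss Hs]]] := lpsi_frac y.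
have : lpsi S (a *: e' - s *: e) = 0.
  rewrite lpsiD -scaleNr !lpsiZ -Hs -Hy rmorphN scaleNr !scalerA mulrC subrr.
  by [].
move/lpsi0 => [u [Su Eu]].
exists (u * s), (u *: e'); split; first exact: (primeM HPp Su Ss).
apply/eqP; rewrite -subr_eq0; apply/eqP.
rewrite (_ : _ - _ = - (u *: (a *: e' - s *: e))); first by rewrite Eu oppr0.
by lmod_id.
Qed.

Definition loc_chainR (P : A -> Prop) (x y : R) :=
  exists s, ~ P s /\ ((exists rho, ((s, 0) : R) * x = rho * y) \/ (exists rho, ((s, 0) : R) * y = rho * x)).

Lemma local_chain (P : A -> Prop) (HPm : is_maximal_ideal P) :
  [/\ arithmetical A,
       (forall P : A -> Prop, in_supp E P -> localization_is_domain P),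
       locally_FP_injective E &
       distributive_submodules E] -> forall x y : R, loc_chainR P x y.
Proof.
move=> [aA sd lfp dE] [a e] [b f].
have HPp := max_prime HPm.
have jA := arith_jensen aA; have jE := distr_jensenM dE.
case: (pselect (forall e : E, exists s, ~ P s /\ s *: e = 0)) => [Zero|NZ].
  have [s1 [P1 E1]] := Zero e; have [s2 [P2 E2]] := Zero f.
  have [t [Pt [[r Er]|[r Er]]]] := chainA_loc HPp jA a b.
  - exists (t * s1 * s2); split; first exact: (primeM HPp (primeM HPp Pt P1) P2).
    left; exists (r * s1 * s2, 0); rewrite !teM /=; congr pair.
      by rewrite (_ : t * s1 * s2 * a = s1 * s2 * (t * a)); [rewrite Er; ring | ring].
    rewrite !scaler0 !addr0 (_ : t * s1 * s2 = t * s2 * s1); last by ring.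
    by rewrite -scalerA E1 scaler0 -scalerA E2 scaler0.
  - exists (t * s1 * s2); split; first exact: (primeM HPp (primeM HPp Pt P1) P2).
    right; exists (r * s1 * s2, 0); rewrite !teM /=; congr pair.
      by rewrite (_ : t * s1 * s2 * b = s1 * s2 * (t * b)); [rewrite Er; ring | ring].
    rewrite !scaler0 !addr0 (_ : r * s1 * s2 = r * s2 * s1); last by ring.
    by rewrite -scalerA E2 scaler0 -scalerA E1 scaler0.
have [e0 He0] : exists e0 : E, forall s, ~ P s -> s *: e0 != 0.
  apply: contrapT => Hn; apply: NZ => e1; apply: contrapT => Hn2; apply: Hn; exists e1.
  by move=> s Ps; apply/negP => /eqP Es; apply: Hn2; exists s.
have Hdiv := loc_div HPm sd lfp He0.
have D : forall a b (e f : E), (forall u, ~ P u -> u * a != 0) ->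
    (exists t r, ~ P t /\ t * b = r * a) ->
    exists s, ~ P s /\ exists rho, ((s, 0) : R) * ((b, f) : R) = rho * ((a, e) : R).
  move=> a1 b1 e1 f1 Na [t [r [Pt Et]]].
  have [s' [h [Ps' Eh]]] := Hdiv a1 Na (t *: f1 - r *: e1).
  exists (s' * t); split; first exact: (primeM HPp Ps' Pt).
  exists (s' * r, h); rewrite !teM /=; congr pair.
    by rewrite -mulrA Et mulrA.
  rewrite !scaler0 !addr0; apply/eqP; rewrite -subr_eq0; apply/eqP.
  rewrite (_ : _ - _ = s' *: (t *: f1 - r *: e1) - a1 *: h); first by rewrite Eh subrr.
  by lmod_id.
have LZ : forall c : A, (exists u, ~ P u /\ u * c = 0) \/ (forall u, ~ P u -> u * c != 0).
  move=> c; case: (pselect (exists u, ~ P u /\ u * c = 0)) => [H|H]; first by left.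
  by right => u Pu; apply/negP => /eqP Eu; apply: H; exists u.
case: (LZ a) => [[u [Pu Eu]]|Na].
  case: (LZ b) => [[v [Pv Ev]]|Nb].
    have [w [Pw [[k Ek]|[k Ek]]]] := chainE_loc HPp jE e f.
    - exists (w * u * v); split; first exact: (primeM HPp (primeM HPp Pw Pu) Pv).
      left; exists (u * v * k, 0); rewrite !teM /=; congr pair.
        rewrite (_ : w * u * v * a = w * v * (u * a)); last by ring.
        rewrite (_ : u * v * k * b = u * k * (v * b)); last by ring.
        by rewrite Eu Ev !mulr0.
      rewrite !scaler0 !addr0 (_ : w * u * v = u * v * w); last by ring.
      by rewrite -scalerA Ek scalerA.
    - exists (w * u * v); split; first exact: (primeM HPp (primeM HPp Pw Pu) Pv).
      right; exists (u * v * k, 0); rewrite !teM /=; congr pair.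
        rewrite (_ : w * u * v * b = w * u * (v * b)); last by ring.
        rewrite (_ : u * v * k * a = v * k * (u * a)); last by ring.
        by rewrite Eu Ev !mulr0.
      rewrite !scaler0 !addr0 (_ : w * u * v = u * v * w); last by ring.
      by rewrite -scalerA Ek scalerA.
  have [s [Ps [rho Erho]]] := D b a f e Nb (ex_intro _ u (ex_intro _ 0 (conj Pu (etrans Eu (esym (mul0r b)))))).
  by exists s; split => //; left; exists rho.
have [t [Pt [[r Er]|[r Er]]]] := chainA_loc HPp jA a b.
  case: (LZ b) => [[v [Pv Ev]]|Nb].
    exfalso; move: (Na (v * t) (primeM HPp Pv Pt)).
    by rewrite -mulrA Er mulrCA Ev mulr0 eqxx.
  have [s [Ps [rho Erho]]] := D b a f e Nb (ex_intro _ t (ex_intro _ r (conj Pt Er))).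
  by exists s; split => //; left; exists rho.
have [s [Ps [rho Erho]]] := D a b e f Na (ex_intro _ t (ex_intro _ r (conj Pt Er))).
by exists s; split => //; right; exists rho.
Qed.

Lemma jensen_of_local : (forall P, is_maximal_ideal P -> forall x y : R, loc_chainR P x y) -> jensen R.
Proof.
move=> HL x y.
pose T := fun t : A => exists a1 a2 : R, [/\ (exists rho, a1 * x = rho * y),
   (exists rho, a2 * y = rho * x) & t = (a1 + a2).1].
have HT : is_ideal T.
  split.
  - exists 0, 0; split; [by exists 0; rewrite !mul0r | by exists 0; rewrite !mul0r | by rewrite addr0].
  - move=> t t' [a1 [a2 [[r1 E1] [r2 E2] ->]]] [a1' [a2' [[r1' E1'] [r2' E2'] ->]]].
    exists (a1 + a1'), (a2 + a2'); split.
    + by exists (r1 + r1'); rewrite !mulrDl E1 E1'.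
    + by exists (r2 + r2'); rewrite !mulrDl E2 E2'.
    + by rewrite /= addrACA.
  - move=> r0 t [a1 [a2 [[r1 E1] [r2 E2] ->]]].
    exists (((r0, 0) : R) * a1), (((r0, 0) : R) * a2); split.
    + by exists (((r0, 0) : R) * r1); rewrite -!mulrA E1.
    + by exists (((r0, 0) : R) * r2); rewrite -!mulrA E2.
    + by rewrite -mulrDr.
case: (pselect (T 1)) => [[a1 [a2 [[r1 E1] [r2 E2] Es]]]|NT1].
  set g := (a1 + a2).2.
  have Ea : a1 + a2 = (1, g) by rewrite [a1 + a2]surjective_pairing -Es.
  have Einv : (a1 + a2) * ((1, - g) : R) = 1.
    by rewrite Ea teM /= te1; congr pair; rewrite ?mulr1 // !scale1r addNr.
  exists (a1 * ((1, - g) : R)); split.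
    by exists (r1 * ((1, - g) : R)); rewrite mulrAC E1 mulrAC.
  exists (r2 * ((1, - g) : R)).
  rewrite (_ : 1 - a1 * ((1, - g) : R) = a2 * ((1, - g) : R)); first by rewrite mulrAC E2 mulrAC.
  by rewrite -Einv mulrDl addrC addKr.
have [P [HPm TP]] := exists_max HT NT1.
have [s [Ps [[rho Erho]|[rho Erho]]]] := HL P HPm x y.
  exfalso; apply: Ps; apply: TP; exists ((s, 0) : R), 0; split.
  - by exists rho.
  - by exists 0; rewrite !mul0r.
  - by rewrite addr0.
exfalso; apply: Ps; apply: TP; exists 0, ((s, 0) : R); split.
- by exists 0; rewrite !mul0r.
- by exists rho.
- by rewrite add0r.
Qed.

Lemma bwd : [/\ arithmetical A,
       (forall P : A -> Prop, in_supp E P -> localization_is_domain P),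
       locally_FP_injective E &
       distributive_submodules E] -> arithmetical R.
Proof.
move=> H; apply: jensen_arith; apply: jensen_of_local => P HPm.
exact: local_chain.
Qed.
End Bwd.

Theorem corollary1p4 (A : comNzRingType) (E : lmodType A) :
  (exists e : E, e != 0) ->
  (arithmetical (triv_ext E) <->
   [/\ arithmetical A,
       (forall P : A -> Prop, in_supp E P -> localization_is_domain P),
       locally_FP_injective E &
       distributive_submodules E]).
Proof.
move=> _; split; first by move=> H; apply: fwd; apply: arith_jensen.
exact: bwd.
Qed.
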